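(* Let $A\in\mathbb{R}^{n\times n}$ be asymptotically stable and $B\in\mathbb{R}^{n\times q}$. For $m\ge1$ let $V_m=[\mathcal V_1,\ldots,\mathcal V_m]\in\mathbb{R}^{n\times 2mq}$, $\mathcal V_i\in\mathbb{R}^{n\times 2q}$, have orthonormal columns spanning the block extended Krylov subspace $\mathbf{EK}_m^\square(A,B)=\operatorname{range}([B,A^{-1}B,AB,A^{-2}B,\ldots,A^{m-1}B,A^{-m}B])$ (nested in $m$), satisfying the Arnoldi relation $$AV_m=V_mT_m+\mathcal V_{m+1}E_{m+1}^{\mathsf T}\underline{T}_m,$$ where $\underline{T}_m=V_{m+1}^{\mathsf T}AV_m\in\mathbb{R}^{2(m+1)q\times 2mq}$, $T_m=V_m^{\mathsf T}AV_m$ is its leading $2mq\times2mq$ block, and $E_{m+1}=e_{m+1}\otimes I_{2q}$. Let $p_j\in\mathbb{C}$ with $\operatorname{Re}(p_j)<0$, let $m_{j-1}\le m_j$ be integers, and let $W_{j-1}=V_{m_{j-1}}\Upsilon_{j-1}$ for some $\Upsilon_{j-1}\in\mathbb{C}^{2m_{j-1}q\times q}$. Seek $S_j=V_{m_j}Y_{m_j}$, $Y_{m_j}\in\mathbb{C}^{2m_jq\times q}$, approximating the solution of $(A+p_jI)S_j=W_{j-1}$, with residual $R_{m_j}=(A+p_jI)S_j-W_{j-1}$. Then: (i) If the Galerkin condition $V_{m_j}^{\mathsf T}R_{m_j}=0$ is imposed, $Y_{m_j}$ is the solution of $$(T_{m_j}+p_jI_{2m_jq})Y_{m_j}=[\Upsilon_{j-1};O_{2(m_j-m_{j-1})q\times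 q}],$$ and $\|R_{m_j}\|_F=\|E_{m_j+1}^{\mathsf T}\underline{T}_{m_j}Y_{m_j}\|_F$. (ii) If a minimal residual condition is imposed, i.e. $Y_{m_j}$ minimizes $\|R_{m_j}\|_F$ over $Y\in\mathbb{C}^{2m_jq\times q}$, then $$Y_{m_j}=\arg\min_{Y\in\mathbb{C}^{2m_jq\times q}}\big\|(\underline{T}_{m_j}+p_j[I_{2m_jq};O_{2q\times2m_jq}])Y-[\Upsilon_{j-1};O_{2(m_j-m_{j-1}+1)q\times q}]\big\|_F,$$ and $\|R_{m_j}\|_F=\|Q_2^{*}[\Upsilon_{j-1};O_{2(m_j-m_{j-1}+1)q\times q}]\|_F$, where the columns of $Q_2$ form an orthonormal basis of the orthogonal complement (in $\mathbb{C}^{2(m_j+1)q}$) of the range of $\underline{T}_{m_j}+p_j[I_{2m_jq};O_{2q\times2m_jq}]$.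
   Context: $[M;N]$ denotes vertical concatenation of $M$ on top of $N$; $O_{a\times b}$ is the $a\times b$ zero matrix; $e_i$ is the $i$-th canonical basis vector; $\otimes$ is the Kronecker product; $\|\cdot\|_F$ is the Frobenius norm; $Q_2^*$ is the conjugate transpose. The matrix $V_{m_{j-1}}$ consists of the first $2m_{j-1}q$ columns of $V_{m_j}$. *)

(* Defs.v *)
From HB Require Import structures.
From mathcomp Require Import all_boot all_order all_algebra.
From mathcomp Require Import reals.
From mathcomp Require Import complex.

Set Implicit Arguments.
Unset Strict Implicit.
Unset Printing Implicit Defensive.

Import Order.TTheory GRing.Theory Num.Theory.
Local Open Scope ring_scope.

Section KrylovDefs.
Variable R : realType.
Local Notation C := (R[i]).

Definition cmx (m n : nat) (M : 'M[R]_(m, n)) : 'M[C]_(m, n) :=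
  map_mx (real_complex R) M.

Definition ctrmx (m n : nat) (M : 'M[C]_(m, n)) : 'M[C]_(n, m) :=
  (map_mx (@conjc R) M)^T.

Definition frob (m n : nat) (M : 'M[C]_(m, n)) : R :=
  Num.sqrt (\sum_(i < m) \sum_(j < n) (complex.Re (M i j) ^+ 2 + complex.Im (M i j) ^+ 2)).

Definition asympt_stable (n : nat) (A : 'M[R]_n) : Prop :=
  forall l : C, eigenvalue (cmx A) l -> complex.Re l < 0.

Definition in_EK (n q m : nat) (A : 'M[R]_n) (B : 'M[R]_(n, q))
    (x : 'cV[R]_n) : Prop :=
  exists (z w : 'I_m -> 'cV[R]_q),
    x = \sum_(i < m) (A ^+ i *m B *m z i + (invmx A) ^+ i.+1 *m B *m w i).

Definition in_range (F : fieldType) (n k : nat) (M : 'M[F]_(n, k))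
    (x : 'cV[F]_n) : Prop :=
  exists y : 'cV[F]_k, x = M *m y.

(* The basis is given by a sequence of columns v 0, v 1, ... ;
   V_m consists of the first 2mq columns (so the V_m are nested). *)
Definition Vm (n q : nat) (v : nat -> 'cV[R]_n) (m : nat) : 'M[R]_(n, 2 * m * q) :=
  \matrix_(i < n, j < 2 * m * q) v j i 0.

(* block column  \mathcal V_{m+1} = columns 2mq, ..., 2(m+1)q - 1 *)
Definition Vblk (n q : nat) (v : nat -> 'cV[R]_n) (m : nat) : 'M[R]_(n, 2 * q) :=
  \matrix_(i < n, j < 2 * q) v (2 * m * q + j)%N i 0.

Definition Tu (n q : nat) (A : 'M[R]_n) (v : nat -> 'cV[R]_n) (m : nat)
  : 'M[R]_(2 * m.+1 * q, 2 * m * q) :=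
  (Vm q v m.+1)^T *m A *m Vm q v m.

Definition Tm (n q : nat) (A : 'M[R]_n) (v : nat -> 'cV[R]_n) (m : nat)
  : 'M[R]_(2 * m * q) :=
  (Vm q v m)^T *m A *m Vm q v m.

(* E_{m+1} = e_{m+1} (x) I_{2q}, of size 2(m+1)q x 2q *)
Definition Emx (q m : nat) : 'M[R]_(2 * m.+1 * q, 2 * q) :=
  \matrix_(i, j) ((i : nat) == (2 * m * q + j)%N)%:R.

Definition IOmx (F : pzRingType) (N k : nat) : 'M[F]_(N, k) :=
  \matrix_(i, j) ((i : nat) == (j : nat))%:R.

(* [U ; O] : pad the a x b matrix U with zero rows to N rows *)
Definition padmx (F : pzRingType) (a b N : nat) (U : 'M[F]_(a, b)) : 'M[F]_(N, b) :=
  \matrix_(i, j) oapp (fun k : 'I_a => U k j) 0 (insub (i : nat)).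

End KrylovDefs.

(* Main.v *)
Require Import Defs.
From HB Require Import structures.
From mathcomp Require Import all_boot all_order all_algebra.
From mathcomp Require Import reals.
From mathcomp Require Import complex.
From mathcomp Require Import zify ring lra.
Import Order.TTheory GRing.Theory Num.Theory.
Local Open Scope ring_scope.

Lemma mulmx_sel (F : pzSemiRingType) m N k (X : 'M[F]_(m,N)) (S : 'M[F]_(N,k)) i j (l : 'I_N) :
  (forall i', S i' j = (i' == l)%:R) -> (X *m S) i j = X i l.
Proof.
move=> HS; rewrite mxE (bigD1 l) //= HS eqxx mulr1 big1 ?addr0 // => i' Hi'.
by rewrite HS (negbTE Hi') mulr0.
Qed.

Arguments mulmx_sel {F m N k X S i j l}.

Lemma IOsel (F : pzRingType) {N k} (H : (k <= N)%N) (j : 'I_k) i' :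
  IOmx F N k i' j = (i' == widen_ord H j)%:R.
Proof. by rewrite mxE. Qed.

Lemma padmxE (F : pzRingType) a b N (U : 'M[F]_(a,b)) : padmx N U = IOmx F N a *m U.
Proof.
apply/matrixP=> i j; rewrite !mxE.
case: insubP => [k _ Hk | Hn] /=.
  rewrite (bigD1 k) //= !mxE Hk eqxx mul1r big1 ?addr0 // => k' Hk'.
  rewrite mxE -Hk; case: eqP => [/val_inj E|_]; last by rewrite mul0r.
  by rewrite E eqxx in Hk'.
rewrite big1 // => k' _; rewrite mxE; case: eqP => [E|_]; last by rewrite mul0r.
by move: Hn; rewrite E ltn_ord.
Qed.

Section S.
Variable R : realType.
Local Notation C := (R[i]).

Lemma Vm_IO n q (v : nat -> 'cV[R]_n) m m2 (H : (2 * m * q <= 2 * m2 * q)%N) :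
  Vm q v m2 *m IOmx R (2 * m2 * q) (2 * m * q) = Vm q v m.
Proof. by apply/matrixP=> i j; rewrite (mulmx_sel (IOsel R H j)) !mxE. Qed.

Lemma conjR (x : R) : conjc (real_complex R x) = real_complex R x.
Proof. by rewrite /= /real_complex_def /= oppr0. Qed.

Lemma cmx_IO N k : cmx (IOmx R N k) = IOmx C N k.
Proof. by apply/matrixP=> i j; rewrite !mxE rmorph_nat. Qed.

Lemma cmxM m n k (X : 'M[R]_(m,n)) (Y : 'M[R]_(n,k)) : cmx (X *m Y) = cmx X *m cmx Y.
Proof. exact: map_mxM. Qed.
Lemma cmxD m n (X Y : 'M[R]_(m,n)) : cmx (X + Y) = cmx X + cmx Y.
Proof. exact: map_mxD. Qed.
Lemma cmx1 m : cmx (1%:M : 'M[R]_m) = 1%:M.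
Proof. exact: map_mx1. Qed.

Lemma ctrmxM m n k (X : 'M[C]_(m,n)) (Y : 'M[C]_(n,k)) : ctrmx (X *m Y) = ctrmx Y *m ctrmx X.
Proof. by rewrite /ctrmx map_mxM trmx_mul. Qed.
Lemma ctrmxK m n (X : 'M[C]_(m,n)) : ctrmx (ctrmx X) = X.
Proof. by apply/matrixP=> i j; rewrite !mxE conjcK. Qed.
Lemma ctrmx_cmx m n (X : 'M[R]_(m,n)) : ctrmx (cmx X) = cmx X^T.
Proof. by apply/matrixP=> i j; rewrite !mxE conjR. Qed.
Lemma ctrmxB m n (X Y : 'M[C]_(m,n)) : ctrmx (X - Y) = ctrmx X - ctrmx Y.
Proof. by apply/matrixP=> i j; rewrite !mxE rmorphB. Qed.
Lemma ctrmxN m n (X : 'M[C]_(m,n)) : ctrmx (- X) = - ctrmx X.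
Proof. by apply/matrixP=> i j; rewrite !mxE rmorphN. Qed.
Lemma ctrmx0 m n : ctrmx (0 : 'M[C]_(m,n)) = 0.
Proof. by apply/matrixP=> i j; rewrite !mxE rmorph0. Qed.
Lemma ctrmxZR m n (a : R) (X : 'M[C]_(m,n)) : ctrmx (real_complex R a *: X) = real_complex R a *: ctrmx X.
Proof. by apply/matrixP=> i j; rewrite !mxE rmorphM; congr (_ * _); exact: conjR. Qed.

Definition nsq {m n} (X : 'M[C]_(m,n)) : R :=
  \sum_(i < m) \sum_(j < n) (complex.Re (X i j) ^+ 2 + complex.Im (X i j) ^+ 2).

Lemma frobE m n (X : 'M[C]_(m,n)) : frob X = Num.sqrt (nsq X).
Proof. by []. Qed.

Lemma gtE {m n} (X : 'M[C]_(m,n)) : \tr (ctrmx X *m X) = real_complex R (nsq X).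
Proof.
rewrite /mxtrace /nsq rmorph_sum; under [RHS]eq_bigr do rewrite rmorph_sum. rewrite [RHS]exchange_big /=; apply: eq_bigr => j _.
rewrite mxE; apply: eq_bigr => i _.
by rewrite !mxE add_Re2_Im2 sqr_normc mulrC.
Qed.

Lemma nsq_ge0 {m n} (X : 'M[C]_(m,n)) : 0 <= nsq X.
Proof. by apply: sumr_ge0 => i _; apply: sumr_ge0 => j _; rewrite addr_ge0 // sqr_ge0. Qed.

Lemma nsq_eq0 {m n} (X : 'M[C]_(m,n)) : nsq X = 0 -> X = 0.
Proof.
move=> H; apply/matrixP => i j; rewrite mxE.
have Hi := psumr_eq0P (fun i _ => sumr_ge0 _ (fun j _ => addr_ge0 (sqr_ge0 _) (sqr_ge0 _))) H (isT : true).
have := psumr_eq0P (fun j _ => addr_ge0 (sqr_ge0 _) (sqr_ge0 _)) (Hi i) (isT : true).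
move=> Hz; have := add_Re2_Im2 (X i j); rewrite Hz rmorph0 => /esym/eqP.
by rewrite sqrf_eq0 normr_eq0 => /eqP.
Qed.

Lemma nsq_inj {m n k l} (X : 'M[C]_(m,n)) (Y : 'M[C]_(k,l)) :
  \tr (ctrmx X *m X) = \tr (ctrmx Y *m Y) -> nsq X = nsq Y.
Proof. by rewrite !gtE => /complexI. Qed.

Lemma nsq_iso {m k n} (U : 'M[C]_(m,k)) (X : 'M[C]_(k,n)) :
  ctrmx U *m U = 1%:M -> nsq (U *m X) = nsq X.
Proof. by move=> HU; apply: nsq_inj; rewrite ctrmxM -mulmxA (mulmxA _ U) HU mul1mx. Qed.

Lemma nsqN {m n} (X : 'M[C]_(m,n)) : nsq (- X) = nsq X.
Proof. by apply: nsq_inj; rewrite ctrmxN mulNmx mulmxN opprK. Qed.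


Lemma Eidx_lt {q} m (j : 'I_(2 * q)) : (2 * m * q + j < 2 * m.+1 * q)%N.
Proof. have := ltn_ord j; lia. Qed.

Definition Eidx {q} m (j : 'I_(2 * q)) : 'I_(2 * m.+1 * q) := Ordinal (Eidx_lt m j).

Lemma Esel {q} m (j : 'I_(2 * q)) i' : Emx R q m i' j = (i' == Eidx m j)%:R.
Proof. by rewrite mxE. Qed.

Lemma Vm_E n q (v : nat -> 'cV[R]_n) m : Vm q v m.+1 *m Emx R q m = Vblk q v m.
Proof. by apply/matrixP=> i j; rewrite (mulmx_sel (Esel m j)) !mxE. Qed.

Lemma EtE q m : (Emx R q m)^T *m Emx R q m = 1%:M.
Proof.
apply/matrixP=> i j; rewrite (mulmx_sel (Esel m j)) !mxE /=.
by rewrite eqn_add2l eq_sym.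
Qed.

Lemma trB n (X Y : 'M[C]_n) : \tr (X - Y) = \tr X - \tr Y.
Proof. by rewrite /mxtrace -sumrB; apply: eq_bigr => i _; rewrite !mxE. Qed.

Lemma expand m k l (M : 'M[C]_(m,k)) (r : 'M[C]_(m,l)) (c : R) :
  nsq (r - real_complex R c *: (M *m (ctrmx M *m r))) =
  nsq r - 2 * c * nsq (ctrmx M *m r) + c ^+ 2 * nsq (M *m (ctrmx M *m r)).
Proof.
apply: complexI; rewrite !rmorphD !rmorphN !rmorphM rmorph_nat -!gtE.
have GE : ctrmx (ctrmx M *m r) = ctrmx r *m M by rewrite ctrmxM ctrmxK.
rewrite ctrmxB ctrmxZR mulmxBl !mulmxBr -!scalemxAl -!scalemxAr.
rewrite !trB scalerA !mxtraceZ.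
rewrite (mulmxA (ctrmx r)) -GE.
have E2 : ctrmx (M *m (ctrmx M *m r)) *m r = ctrmx (ctrmx M *m r) *m (ctrmx M *m r).
  by rewrite ctrmxM -mulmxA.
rewrite E2; move: (ctrmx M *m r) => G.
rewrite !gtE; ring.
Qed.

Lemma lsq_normal m k l (M : 'M[C]_(m,k)) (Y : 'M[C]_(k,l)) (rhs : 'M[C]_(m,l)) :
  (forall Y', nsq (M *m Y - rhs) <= nsq (M *m Y' - rhs)) ->
  ctrmx M *m (M *m Y - rhs) = 0.
Proof.
move=> Hmin.
have := nsq_ge0 (ctrmx M *m (M *m Y - rhs)).
have := nsq_ge0 (M *m (ctrmx M *m (M *m Y - rhs))).
set g := nsq (ctrmx M *m _); set h := nsq (M *m _) => h0 g0.
set e := g / (h + 1).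
have eh : e * (h + 1) = g by rewrite /e divfK // lt0r_neq0 // ltr_wpDl.
have e0 : 0 <= e by rewrite /e divr_ge0 // addr_ge0.
have := Hmin (Y - real_complex R e *: (ctrmx M *m (M *m Y - rhs))).
rewrite mulmxBr -scalemxAr addrAC expand -/g -/h => H.
have : e ^+ 2 <= 0 by nra.
rewrite expr2 => He.
have Ee : e = 0 by nra.
have : g = 0 by rewrite -eh Ee mul0r.
exact: nsq_eq0.
Qed.

Lemma range_proj {m k l s} (Q : 'M[C]_(m,k)) (N : 'M[C]_(s,m)) (r : 'M[C]_(m,l)) :
  ctrmx Q *m Q = 1%:M -> (forall x : 'cV_m, in_range Q x <-> N *m x = 0) ->
  N *m r = 0 -> r = Q *m (ctrmx Q *m r).
Proof.
move=> HQ HR Hr; apply/matrixP => i j.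
have Hc : N *m col j r = 0 by rewrite colE mulmxA Hr mul0mx.
have [y Hy] := (proj2 (HR _)) Hc.
have Hcol : col j r = Q *m (ctrmx Q *m col j r).
  by rewrite Hy [ctrmx Q *m _]mulmxA HQ mul1mx.
transitivity ((col j r) i 0); first by rewrite mxE.
rewrite Hcol.
have -> : Q *m (ctrmx Q *m col j r) = col j (Q *m (ctrmx Q *m r)) by rewrite !colE !mulmxA.
by rewrite mxE.
Qed.

Lemma range_ann {m k s} (Q : 'M[C]_(m,k)) (N : 'M[C]_(s,m)) :
  (forall x : 'cV_m, in_range Q x <-> N *m x = 0) -> N *m Q = 0.
Proof.
move=> HR; apply/matrixP => i j.
have : N *m col j Q = 0 by apply/HR; exists (delta_mx j 0); rewrite colE.
move=> H0; have := congr1 (fun X : 'cV[C]_s => X i 0) H0.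
by rewrite /= colE mulmxA -colE !mxE.
Qed.

End S.

Theorem corollary3p2 (R : realType) (n q : nat)
  (A : 'M[R]_n) (B : 'M[R]_(n, q)) (v : nat -> 'cV[R]_n)
  (p : R[i]) (mj1 mj : nat) (Ups : 'M[R[i]]_(2 * mj1 * q, q)) :
  asympt_stable A ->
  (* basis: orthonormal columns spanning EK_m(A,B), for 1 <= m <= mj+1 *)
  (forall m, (1 <= m <= mj.+1)%N ->
     (Vm q v m)^T *m Vm q v m = 1%:M /\
     (forall x : 'cV[R]_n, in_range (Vm q v m) x <-> in_EK m A B x)) ->
  (* Arnoldi relation *)
  (forall m, (1 <= m <= mj)%N ->
     A *m Vm q v m =
     Vm q v m *m Tm q A v m + Vblk q v m *m (Emx R q m)^T *m Tu q A v m) ->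
  complex.Re p < 0 ->
  (1 <= mj1 <= mj)%N ->
  let W := cmx (Vm q v mj1) *m Ups in
  let Res := fun Y : 'M[R[i]]_(2 * mj * q, q) =>
               (cmx A + p%:M) *m (cmx (Vm q v mj) *m Y) - W in
  (* (i) Galerkin *)
  (forall Y : 'M[R[i]]_(2 * mj * q, q),
     ctrmx (cmx (Vm q v mj)) *m Res Y = 0 ->
     (cmx (Tm q A v mj) + p%:M) *m Y = padmx (2 * mj * q) Ups /\
     frob (Res Y) = frob (cmx ((Emx R q mj)^T *m Tu q A v mj) *m Y)) /\
  (* (ii) minimal residual *)
  (forall Y : 'M[R[i]]_(2 * mj * q, q),
     (forall Y' : 'M[R[i]]_(2 * mj * q, q), frob (Res Y) <= frob (Res Y')) ->
     let M := cmx (Tu q A v mj) + p *: IOmx R[i] (2 * mj.+1 * q) (2 * mj * q) in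
     let rhs := padmx (2 * mj.+1 * q) Ups in
     (forall Y' : 'M[R[i]]_(2 * mj * q, q),
        frob (M *m Y - rhs) <= frob (M *m Y' - rhs)) /\
     (forall (k : nat) (Q2 : 'M[R[i]]_(2 * mj.+1 * q, k)),
        ctrmx Q2 *m Q2 = 1%:M ->
        (forall x : 'cV[R[i]]_(2 * mj.+1 * q),
           in_range Q2 x <-> ctrmx M *m x = 0) ->
        frob (Res Y) = frob (ctrmx Q2 *m rhs))).
Proof.
move=> _ Horth Harn _ /andP[Hm1 Hm1j] W Res.
have [OV _] := Horth mj (ltac:(apply/andP; split; lia)).
have [OV' _] := Horth mj.+1 (ltac:(apply/andP; split; lia)).
have HA := Harn mj (ltac:(apply/andP; split; lia)).
have b1 : (2 * mj * q <= 2 * mj.+1 * q)%N by apply: leq_mul => //; apply: leq_mul.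
have b2 : (2 * mj1 * q <= 2 * mj * q)%N by apply: leq_mul => //; apply: leq_mul.
have b3 : (2 * mj1 * q <= 2 * mj.+1 * q)%N by apply: leq_mul => //; apply: leq_mul => //; lia.
have VIO := @Vm_IO R n q v _ _ b1.
have V1IO := @Vm_IO R n q v _ _ b2.
have V1IO' := @Vm_IO R n q v _ _ b3.
have cV1Ups : cmx (Vm q v mj1) *m Ups = cmx (Vm q v mj) *m padmx (2 * mj * q) Ups.
  by rewrite padmxE -cmx_IO mulmxA -cmxM V1IO.
have cV1Ups' : cmx (Vm q v mj1) *m Ups = cmx (Vm q v mj.+1) *m padmx (2 * mj.+1 * q) Ups.
  by rewrite padmxE -cmx_IO mulmxA -cmxM V1IO'.
have K : A *m Vm q v mj = Vm q v mj.+1 *m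
    (IOmx R (2 * mj.+1 * q) (2 * mj * q) *m Tm q A v mj +
     Emx R q mj *m ((Emx R q mj)^T *m Tu q A v mj)).
  by rewrite HA mulmxDr !mulmxA VIO Vm_E.
have TuE : Tu q A v mj = IOmx R (2 * mj.+1 * q) (2 * mj * q) *m Tm q A v mj +
     Emx R q mj *m ((Emx R q mj)^T *m Tu q A v mj).
  by rewrite [LHS]/Tu -mulmxA K mulmxA OV' mul1mx.
have AV : A *m Vm q v mj = Vm q v mj.+1 *m Tu q A v mj by rewrite K -TuE.
have OVc' : ctrmx (cmx (Vm q v mj.+1)) *m cmx (Vm q v mj.+1) = 1%:M.
  by rewrite ctrmx_cmx -cmxM OV' cmx1.
split.
  move=> Y HG.
  have Gal : (cmx (Tm q A v mj) + p%:M) *m Y = padmx (2 * mj * q) Ups.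
    apply/eqP; rewrite -subr_eq0; apply/eqP; rewrite -HG /Res /W.
    rewrite ctrmx_cmx cV1Ups mulmxBr [in RHS]mulmxDl [in RHS]mulmxDr.
    rewrite [cmx _ *m (cmx _ *m padmx _ _)]mulmxA -cmxM OV cmx1 mul1mx.
    rewrite mul_scalar_mx -scalemxAr [cmx (Vm q v mj)^T *m (cmx (Vm q v mj) *m Y)]mulmxA -cmxM OV cmx1 mul1mx.
    rewrite mulmxDl mul_scalar_mx /Tm !cmxM !mulmxA.
    done.
  split => //.
  have key : (cmx A + p%:M) *m cmx (Vm q v mj) = cmx (Vm q v mj) *m (cmx (Tm q A v mj) + p%:M)
      + cmx (Vblk q v mj) *m cmx ((Emx R q mj)^T *m Tu q A v mj).
    rewrite mulmxDl mulmxDr mul_scalar_mx mul_mx_scalar -cmxM HA cmxD -mulmxA !cmxM.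
    by rewrite addrAC.
  have ResE : Res Y = cmx (Vblk q v mj) *m (cmx ((Emx R q mj)^T *m Tu q A v mj) *m Y).
    rewrite /Res /W cV1Ups -Gal mulmxA key mulmxDl -!mulmxA.
    by rewrite addrAC subrr add0r.
  have OVb : ctrmx (cmx (Vblk q v mj)) *m cmx (Vblk q v mj) = 1%:M.
    by rewrite ctrmx_cmx -cmxM -Vm_E trmx_mul mulmxA -(mulmxA _ _ (Vm q v mj.+1)) OV' mulmx1 EtE cmx1.
  by rewrite !frobE ResE nsq_iso.
move=> Y Hmin M rhs.
have key2 : (cmx A + p%:M) *m cmx (Vm q v mj) = cmx (Vm q v mj.+1) *m M.
  rewrite mulmxDl mul_scalar_mx -cmxM AV cmxM -VIO cmxM cmx_IO /M mulmxDr -scalemxAr.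
  done.
have ResE2 : forall Y', Res Y' = cmx (Vm q v mj.+1) *m (M *m Y' - rhs).
  move=> Y'; rewrite /Res /W cV1Ups' mulmxA key2 -mulmxA mulmxBr.
  done.
have frobRes : forall Y', frob (Res Y') = frob (M *m Y' - rhs).
  by move=> Y'; rewrite !frobE ResE2 nsq_iso.
split.
  by move=> Y'; rewrite -!frobRes; exact: Hmin.
move=> k Q2 HQ HR.
have Hn : ctrmx M *m (M *m Y - rhs) = 0.
  apply: lsq_normal => Y'.
  have := Hmin Y'; rewrite !frobRes !frobE ler_sqrt //; exact: nsq_ge0.
have Hp := range_proj R _ _ _ HQ HR Hn.
have QM : ctrmx Q2 *m M = 0.
  by rewrite -[M]ctrmxK -ctrmxM (range_ann R _ _ HR) ctrmx0.
rewrite frobRes !frobE Hp nsq_iso // mulmxBr mulmxA QM mul0mx sub0r nsqN.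
done.
Qed.
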